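(* Let $q\ge2$ and let $U_C$ be the operator on $\mathbb{C}^q\otimes\mathbb{C}^q$ with matrix elements $$\langle k\alpha|U_C|j\beta\rangle=\frac1q\exp\!\Bigl(-\frac{2\pi i}{q}\bigl[k\alpha+2j\beta-(k\beta+j\alpha)\bigr]\Bigr),\qquad k,\alpha,j,\beta\in\{0,\dots,q-1\}.$$ Then $U_C$ is unitary and dual-unitary for every $q$. If $q$ is odd, $U_C$ is 2-unitary, so $e_p(U_C)=1$ and all nontrivial eigenvalues of $\mathcal{M}_\pm^{U_C}$ vanish. If $q$ is even, $U_C$ is not 2-unitary and $e_p(U_C)=\frac{q^2-2}{q^2-1}$.
   Context: Product basis $|i\alpha\rangle$ of $\mathbb{C}^q\otimes\mathbb{C}^q$. Realignment $\langle\beta\alpha|X^{R_1}|ji\rangle=\langle i\alpha|X|j\beta\rangle$, partial transpose $\langle i\beta|X^{T_2}|j\alpha\rangle=\langle i\alpha|X|j\beta\rangle$. A unitary $U$ is dual-unitary if $U^{R_1}$ is unitary and 2-unitary if both $U^{R_1}$ and $U^{T_2}$ are unitary. $S$ is the swap. $E(U)=1-q^{-4}\operatorname{tr}[(U^{R_1}U^{R_1\dagger})^2]$, $E(S)=1-1/q^2$, $e_p(U)=\frac{E(U)+E(US)-E(S)}{E(S)}$. $\mathcal{M}_+^U(a)=\frac1q\operatorname{tr}_1[U^\dagger(a\otimes I)U]$, $\mathcal{M}_-^U(a)=\frac1q\operatorname{tr}_2[U^\dagger(I\otimes a)U]$ on $q\times q$ matrices; their nontrivial eigenvalues are the eigenvalues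 of their restrictions to traceless matrices. *)

(* Defs.v *)
From HB Require Import structures.
From mathcomp Require Import all_boot all_order all_algebra.
From mathcomp Require Import complex.
From mathcomp Require Import all_classical all_reals all_analysis.
Set Implicit Arguments. Unset Strict Implicit. Unset Printing Implicit Defensive.
Import Order.TTheory GRing.Theory Num.Theory.
Local Open Scope ring_scope.
Local Open Scope complex_scope.

(* Complex numbers: C = R[i] over an arbitrary realType R.
   The space C^q (x) C^q is modelled by 'cV_(q*q); the product basis vector
   |i alpha> is the index  idx i alpha := mxvec_index i alpha. *)

Section Q.
Variables (R : realType) (q : nat).
Local Notation C := R[i].
Local Notation Mq := 'M[C]_(q * q).

Definition idx (i a : 'I_q) : 'I_(q * q) := mxvec_index i a.

Definition pair_of (x : 'I_(q * q)) : 'I_q * 'I_q :=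
  enum_val (cast_ord (esym (mxvec_cast q q)) x).

Definition mx4 (f : 'I_q -> 'I_q -> 'I_q -> 'I_q -> C) : Mq :=
  \matrix_(x, y) f (pair_of x).1 (pair_of x).2 (pair_of y).1 (pair_of y).2.

Definition adj m n (A : 'M[C]_(m, n)) : 'M[C]_(n, m) := (map_mx conjc A)^T.

Definition unitary n (A : 'M[C]_n) : Prop :=
  A *m adj A = 1%:M /\ adj A *m A = 1%:M.

Definition realign (X : Mq) : Mq :=
  mx4 (fun b a j i => X (idx i a) (idx j b)).

Definition ptrans2 (X : Mq) : Mq :=
  mx4 (fun i b j a => X (idx i a) (idx j b)).

Definition dual_unitary (U : Mq) : Prop := unitary U /\ unitary (realign U).
Definition two_unitary (U : Mq) : Prop :=
  unitary U /\ unitary (realign U) /\ unitary (ptrans2 U).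

Definition swap : Mq := mx4 (fun i a j b => ((i == b) && (a == j))%:R).

Definition Ent (U : Mq) : C :=
  1 - (q%:R ^- 4) * \tr ((realign U *m adj (realign U)) ^+ 2).

Definition e_p (U : Mq) : C :=
  (Ent U + Ent (U *m swap) - Ent swap) / Ent swap.

Definition tensorI (a : 'M[C]_q) : Mq :=
  mx4 (fun i al j be => a i j * (al == be)%:R).
Definition Itensor (a : 'M[C]_q) : Mq :=
  mx4 (fun i al j be => (i == j)%:R * a al be).

Definition ptr1 (X : Mq) : 'M[C]_q :=
  \matrix_(al, be) \sum_(i < q) X (idx i al) (idx i be).
Definition ptr2 (X : Mq) : 'M[C]_q :=
  \matrix_(i, j) \sum_(al < q) X (idx i al) (idx j al).

Definition Mplus (U : Mq) (a : 'M[C]_q) : 'M[C]_q :=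
  q%:R^-1 *: ptr1 (adj U *m tensorI a *m U).
Definition Mminus (U : Mq) (a : 'M[C]_q) : 'M[C]_q :=
  q%:R^-1 *: ptr2 (adj U *m Itensor a *m U).

(* lambda is an eigenvalue of the restriction of M to traceless matrices *)
Definition nontriv_eigenvalue (M : 'M[C]_q -> 'M[C]_q) (lam : C) : Prop :=
  exists a : 'M[C]_q, [/\ a != 0, \tr a = 0 & M a = lam *: a].

Definition expi (t : R) : C := cos t +i* sin t.

Definition U_C : Mq :=
  mx4 (fun k al j be =>
    q%:R^-1 * expi (- (2 * pi / q%:R) *
      ((k * al + 2 * j * be)%:R - (k * be + j * al)%:R))).

End Q.

(* Main.v *)
Require Import Defs.
From HB Require Import structures.
From mathcomp Require Import all_boot all_order all_algebra.
From mathcomp Require Import complex.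
From mathcomp Require Import all_classical all_reals all_analysis.
From mathcomp Require Import zify ring lra.
Import Order.TTheory GRing.Theory Num.Theory.
Local Open Scope ring_scope.
Local Open Scope complex_scope.

Section P1.
Variables (R : realType) (q : nat).
Hypothesis hq : (2 <= q)%N.
Local Notation C := R[i].

Definition ee (m : int) : C := expi (- (2 * pi / q%:R) * m%:~R).

Lemma expiD (x y : R) : expi (x + y) = expi x * expi y.
Proof.
rewrite /expi; apply/eqP; rewrite eq_complex /= cosD sinD; apply/andP; split; apply/eqP; ring.
Qed.

Lemma eeD m n : ee (m + n) = ee m * ee n.
Proof. by rewrite /ee rmorphD /= mulrDr expiD. Qed.

Lemma ee0 : ee 0 = 1.
Proof. by rewrite /ee mulr0 /expi cos0 sin0. Qed.

Lemma eeN m : ee (- m) = conjc (ee m).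
Proof. by rewrite /ee /expi rmorphN /= mulrN cosN sinN. Qed.


Lemma eeq : ee q%:Z = 1.
Proof.
have q0 : (q%:R : R) != 0 by rewrite pnatr_eq0; case: q hq.
rewrite /ee /expi.
have -> : - (2 * pi / q%:R) * (q%:Z)%:~R = - (pi *+ 2) :> R.
  by rewrite -[(q%:Z)%:~R]/(q%:R : R) mulr2n; field.
by rewrite cosN sinN cos2pi sin2pi oppr0.
Qed.

Lemma eeMn m (n : nat) : ee (m * n%:Z) = ee m ^+ n.
Proof.
elim: n => [|n IH]; first by rewrite mulr0 ee0 expr0.
by rewrite -[n.+1]addn1 PoszD mulrDr mulr1 eeD IH exprD expr1.
Qed.

Lemma ee_dvd m : (q%:Z %| m)%Z -> ee m = 1.
Proof.
move=> /dvdzP [t ->]; case: t => n.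
  by rewrite mulrC eeMn eeq expr1n.
by rewrite NegzE mulNr eeN mulrC eeMn eeq expr1n conjc1.
Qed.


Lemma q0R : (q%:R : R) != 0.
Proof. by rewrite pnatr_eq0; case: q hq. Qed.

Lemma ee_neq1 m : ~~ (q%:Z %| m)%Z -> ee m != 1.
Proof.
move=> nd.
have qz0 : (q%:Z != 0) by case: q hq.
have hr0 := modz_ge0 m qz0.
have hrq : ((m %% q)%Z < q%:Z) by apply: ltz_pmod; case: q hq.
have -> : ee m = ee (m %% q)%Z.
  by rewrite {1}(divz_eq m q) eeD ee_dvd ?mul1r // dvdz_mull.
have hrn : (m %% q)%Z != 0 by apply: contra nd => /eqP h; apply/dvdz_mod0P.
move: hr0 hrq hrn; case: (m %% q)%Z => // n _ hnq hn0.
have hn : (0 < n < q)%N by apply/andP; split; lia.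
set y : R := n%:R / q%:R.
have hy0 : 0 < y by rewrite divr_gt0 // ltr0n; lia.
have hy1 : y < 1 by rewrite ltr_pdivrMr ?ltr0n ?mul1r ?ltr_nat; lia.
set x : R := 2 * pi * y.
have hpi := @pi_gt0 R.
have hx0 : 0 < x by rewrite /x; nra.
have hx2 : x < 2 * pi by rewrite /x; nra.
rewrite /ee /expi.
have -> : - (2 * pi / q%:R) * (Posz n)%:~R = - x.
  by rewrite /x /y -[(Posz n)%:~R]/(n%:R : R) mulNr mulrA mulrAC.
rewrite cosN sinN; apply/negP => /eqP [hc hs].
case: (ltrgtP x pi) => hxp.
- have := sin_gt0_pi (x:=x); rewrite hx0 hxp => /(_ isT); lra.
- have : 0 < sin (x - pi) by apply: sin_gt0_pi; apply/andP; split; lra.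
  have := sinDpi (x - pi); rewrite subrK; lra.
- by move: hc; rewrite hxp cospi; lra.
Qed.

Definition D (m : int) : C := ((q%:Z %| m)%Z)%:R.

Lemma DE m : D m = ((q%:Z %| m)%Z)%:R.
Proof. by []. Qed.

Lemma Ssum m : \sum_(j < q) ee (j%:Z * m) = q%:R * D m.
Proof.
rewrite /D; have [qm|nqm] := boolP (q%:Z %| m)%Z.
  rewrite mulr1; under eq_bigr do rewrite ee_dvd ?dvdz_mull //.
  by rewrite sumr_const card_ord.
rewrite mulr0.
under eq_bigr do rewrite mulrC eeMn.
have h := subrX1 (ee m) q.
rewrite -eeMn ee_dvd ?dvdz_mull // subrr in h.
move/eqP: h; rewrite eq_sym mulf_eq0 subr_eq0 (negbTE (@ee_neq1 m nqm)) /=.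
by move/eqP.
Qed.

Lemma dsum m1 m2 c0 :
  \sum_(k < q) \sum_(c < q) ee (k%:Z * m1 + c%:Z * m2 + c0)
  = ee c0 * (q%:R * D m1) * (q%:R * D m2).
Proof.
rewrite -!Ssum -mulrA big_distrlr mulr_sumr; apply: eq_bigr => k _.
rewrite mulr_sumr; apply: eq_bigr => c _.
by rewrite !eeD mulrA mulrC mulrA.
Qed.

Lemma dvd_ord (a b : 'I_q) : (q%:Z %| a%:Z - b%:Z)%Z = (a == b).
Proof.
have ha := ltn_ord a; have hb := ltn_ord b.
rewrite dvdzE; apply/idP/eqP => [h|->]; last by rewrite subrr.
have : (`|a%:Z - b%:Z| < q)%N by lia.
move: h; case/boolP: (`|a%:Z - b%:Z| == 0)%N => [h0 _ _| h0 h1 h2].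
  by apply/val_inj/eqP; rewrite -distn_eq0.
have h3 : (0 < `|a%:Z - b%:Z|)%N by rewrite lt0n.
have := dvdn_leq h3 h1; lia.
Qed.

Lemma Dord (a b : 'I_q) : D (a%:Z - b%:Z) = (a == b)%:R.
Proof. by rewrite /D dvd_ord. Qed.

End P1.


Section P2.
Variables (R : realType) (q : nat).
Hypothesis hq : (2 <= q)%N.
Local Notation C := R[i].
Local Notation D := (D R q).

Lemma D2odd y : odd q -> D (2 * y) = D y.
Proof.
move=> oq; rewrite /D Gauss_dvdzr //.
by rewrite coprimezE /= coprimen2.
Qed.

Lemma sum_delta (F : 'I_q -> C) (x0 : 'I_q) :
  \sum_(x < q) (x0 == x)%:R * F x = F x0.
Proof.
rewrite (bigD1 x0) //= eqxx mul1r big1 ?addr0 // => x /negbTE.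
by rewrite eq_sym => ->; rewrite mul0r.
Qed.

Lemma countD c : \sum_(x < q) D (c - x%:Z) = 1.
Proof.
have qz0 : (q%:Z != 0) by case: q hq.
have hr0 := modz_ge0 c qz0.
have hrq : ((c %% q)%Z < q%:Z) by apply: ltz_pmod; case: q hq.
have E x : (q%:Z %| c - x)%Z = (q%:Z %| (c %% q)%Z - x)%Z.
  by rewrite {1}(divz_eq c q) -addrA rpredDl // dvdz_mull.
move: hr0 hrq E; case: (c %% q)%Z => // n _ hnq E.
have hn : (n < q)%N by lia.
under eq_bigr => x _ do rewrite /D E (@dvd_ord q hq (Ordinal hn)).
transitivity (\sum_(x < q) (Ordinal hn == x)%:R * (fun _ : 'I_q => (1:C)) x).
  by apply: eq_bigr => x _; rewrite mulr1.
exact: sum_delta.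
Qed.

Lemma DD x y : D x * D y = ((q%:Z %| x)%Z && (q%:Z %| y)%Z)%:R.
Proof. by rewrite /D -natrM mulnb. Qed.

Lemma D2even y : ~~ odd q -> D (2 * y) = D y + D (y + (q./2)%:Z).
Proof.
move=> eq.
set h := q./2.
have hq2 : q = (h * 2)%N by rewrite /h -[LHS]odd_double_half (negbTE eq) add0n -muln2.
have hqz : q%:Z = 2 * h%:Z by rewrite hq2 PoszM mulrC.
have h0 : (0 < h < q)%N by lia.
have excl : ~~ ((q%:Z %| y)%Z && (q%:Z %| y + h%:Z)%Z).
  apply/negP => /andP [d1 d2].
  have : (q%:Z %| h%:Z)%Z by rewrite -(rpredDl _ d1).
  rewrite dvdzE /= => /(dvdn_leq (proj1 (andP h0))); lia.
have equiv : (q%:Z %| 2 * y)%Z = (q%:Z %| y)%Z || (q%:Z %| y + h%:Z)%Z.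
  apply/idP/idP.
  - rewrite hqz dvdz_mul2l // => /dvdzP [t ht].
    have ht2 := divz_eq t 2.
    have hr0 : 0 <= (t %% 2)%Z by apply: modz_ge0.
    have hr1 : ((t %% 2)%Z < 2) by apply: ltz_pmod.
    have : (t %% 2)%Z = 0 \/ (t %% 2)%Z = 1 by lia.
    case=> hr; rewrite hr in ht2.
    + apply/orP; left; apply/dvdzP; exists (t %/ 2)%Z.
      by rewrite ht {1}ht2 addr0; ring.
    + apply/orP; right; apply/dvdzP; exists ((t %/ 2)%Z + 1).
      by rewrite ht {1}ht2; ring.
  - case/orP => d.
    + exact: dvdz_mull.
    + have -> : 2 * y = 2 * (y + h%:Z) - q%:Z by rewrite hqz; ring.
      by rewrite rpredB // ?dvdz_mull.
rewrite /D equiv.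
move: excl; case: (q%:Z %| y)%Z; case: (q%:Z %| y + h%:Z)%Z => //= _;
  by rewrite ?add0r ?addr0.
Qed.

End P2.


Section P3.
Variables (R : realType) (q : nat).
Local Notation C := R[i].
Local Notation Mq := 'M[C]_(q * q).

Lemma pair_of_idx (i a : 'I_q) : pair_of (idx i a) = (i, a).
Proof. by rewrite /pair_of /idx /mxvec_index cast_ordK enum_rankK. Qed.

Lemma idx_pair (x : 'I_(q * q)) : idx (pair_of x).1 (pair_of x).2 = x.
Proof. by rewrite /pair_of /idx /mxvec_index -surjective_pairing enum_valK cast_ordKV. Qed.

Lemma idx_eq (i a j b : 'I_q) : (idx i a == idx j b) = (i == j) && (a == b).
Proof.
apply/eqP/andP => [h|[/eqP -> /eqP ->]] //.
by have := congr1 (@pair_of q) h; rewrite !pair_of_idx => -[-> ->].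
Qed.

Lemma mx4E f (i a j b : 'I_q) : mx4 f (idx i a) (idx j b) = f i a j b :> C.
Proof. by rewrite /mx4 mxE !pair_of_idx. Qed.

Lemma sum_idx (F : 'I_(q * q) -> C) :
  \sum_(x < q * q) F x = \sum_(i < q) \sum_(a < q) F (idx i a).
Proof.
rewrite pair_bigA /=.
rewrite (reindex (fun p : 'I_q * 'I_q => idx p.1 p.2)) //=.
exists (@pair_of q) => [p _|x _]; last exact: idx_pair.
by rewrite pair_of_idx -surjective_pairing.
Qed.

Lemma mx_ext (A B : Mq) :
  (forall i a j b, A (idx i a) (idx j b) = B (idx i a) (idx j b)) -> A = B.
Proof. by move=> h; apply/matrixP => x y; rewrite -(idx_pair x) -(idx_pair y) h. Qed.

Lemma mulE (A B : Mq) i a j b :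
  (A *m B) (idx i a) (idx j b) =
  \sum_(k < q) \sum_(c < q) A (idx i a) (idx k c) * B (idx k c) (idx j b).
Proof. by rewrite mxE sum_idx. Qed.

Lemma adjE m n (A : 'M[C]_(m, n)) x y : adj A x y = conjc (A y x).
Proof. by rewrite /adj !mxE. Qed.

Lemma oneE (i a j b : 'I_q) :
  (1%:M : Mq) (idx i a) (idx j b) = ((i == j) && (a == b))%:R.
Proof. by rewrite mxE idx_eq. Qed.

Lemma trE (A : Mq) : \tr A = \sum_(i < q) \sum_(a < q) A (idx i a) (idx i a).
Proof. by rewrite /mxtrace sum_idx. Qed.

Lemma unitary4 (f : 'I_q -> 'I_q -> 'I_q -> 'I_q -> C) :
  (forall i a i' a', \sum_(k < q) \sum_(c < q) f i a k c * conjc (f i' a' k c)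
     = ((i == i') && (a == a'))%:R) -> unitary (mx4 f).
Proof.
move=> h.
have h1 : mx4 f *m adj (mx4 f) = 1%:M.
  apply: mx_ext => i a j b; rewrite mulE oneE -h.
  by apply: eq_bigr => k _; apply: eq_bigr => c _; rewrite adjE !mx4E.
by split => //; apply: mulmx1C.
Qed.

Lemma unitary_mul4 (A : Mq) : unitary A -> forall i a j b,
  \sum_(k < q) \sum_(c < q) A (idx i a) (idx k c) * conjc (A (idx j b) (idx k c))
   = ((i == j) && (a == b))%:R.
Proof.
move=> [h1 _] i a j b; rewrite -oneE -h1 mulE.
by apply: eq_bigr => k _; apply: eq_bigr => c _; rewrite adjE.
Qed.

Lemma unitary_mul4' (A : Mq) : unitary A -> forall i a j b,
  \sum_(k < q) \sum_(c < q) conjc (A (idx k c) (idx i a)) * A (idx k c) (idx j b)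
   = ((i == j) && (a == b))%:R.
Proof.
move=> [_ h1] i a j b; rewrite -oneE -h1 mulE.
by apply: eq_bigr => k _; apply: eq_bigr => c _; rewrite adjE.
Qed.

End P3.


Section P4.
Variables (R : realType) (q : nat).
Hypothesis hq : (2 <= q)%N.
Local Notation C := R[i].
Local Notation Mq := 'M[C]_(q * q).
Local Notation ee := (ee R q).
Local Notation D := (D R q).
Local Notation UU := (U_C R q).

Definition phi (k a j b : 'I_q) : int := (k * a + 2 * j * b)%N%:Z - (k * b + j * a)%N%:Z.

Lemma UE k a j b : UU (idx k a) (idx j b) = q%:R^-1 * ee (phi k a j b).
Proof.
rewrite /U_C mx4E /ee /phi; congr (_ * expi (_ * _)).
by rewrite rmorphB.
Qed.

Lemma conjM (x y : C) : conjc (x * y) = conjc x * conjc y.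
Proof.
case: x => a b; case: y => c d; apply/eqP; rewrite eq_complex /=.
by apply/andP; split; apply/eqP; ring.
Qed.

Lemma Uprod i a k c i' a' k' c' :
  UU (idx i a) (idx k c) * conjc (UU (idx i' a') (idx k' c'))
  = q%:R^-1 * q%:R^-1 * ee (phi i a k c - phi i' a' k' c').
Proof.
rewrite !UE conjM conjc_inv conjc_nat -eeN eeD; ring.
Qed.

Lemma sum_form (F : 'I_q -> 'I_q -> C) m1 m2 c0 :
  (forall k c, F k c = q%:R^-1 * q%:R^-1 * ee (k%:Z * m1 + c%:Z * m2 + c0)) ->
  \sum_(k < q) \sum_(c < q) F k c = ee c0 * D m1 * D m2.
Proof.
move=> h; under eq_bigr => k _ do under eq_bigr => c _ do rewrite h.
under eq_bigr => k _ do rewrite -mulr_sumr.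
rewrite -mulr_sumr dsum //.
have q0 : (q%:R : C) != 0 by rewrite pnatr_eq0; case: q hq.
by field.
Qed.

Lemma unitaryE (A : Mq) :
  (forall i a j b, \sum_(k < q) \sum_(c < q) A (idx i a) (idx k c) * conjc (A (idx j b) (idx k c))
     = ((i == j) && (a == b))%:R) -> unitary A.
Proof.
move=> h.
have h1 : A *m adj A = 1%:M.
  apply: mx_ext => i a j b; rewrite mulE oneE -h.
  by apply: eq_bigr => k _; apply: eq_bigr => c _; rewrite adjE.
by split => //; apply: mulmx1C.
Qed.

Lemma U_unitary : unitary UU.
Proof.
apply: unitaryE => i a i' a'.
rewrite (@sum_form _ (a'%:Z - a%:Z) (i'%:Z - i%:Z) (i%:Z * a%:Z - i'%:Z * a'%:Z)); last first.
  by move=> k c; rewrite Uprod /phi !PoszD !PoszM; congr (_ * ee _); ring.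
rewrite !(@Dord R q hq).
case: (eqVneq i i') => [<-|]; case: (eqVneq a a') => [<-|] //= *;
  by rewrite ?subrr ?ee0 ?mulr0 ?mul0r ?mulr1.
Qed.

End P4.


Section P5.
Variables (R : realType) (q : nat).
Hypothesis hq : (2 <= q)%N.
Local Notation C := R[i].
Local Notation Mq := 'M[C]_(q * q).
Local Notation ee := (ee R q).
Local Notation D := (D R q).
Local Notation UU := (U_C R q).

Lemma realignE (X : Mq) b a j i : realign X (idx b a) (idx j i) = X (idx i a) (idx j b).
Proof. by rewrite /realign mx4E. Qed.

Lemma ptransE (X : Mq) i b j a : ptrans2 X (idx i b) (idx j a) = X (idx i a) (idx j b).
Proof. by rewrite /ptrans2 mx4E. Qed.

Lemma dvd_comb (x y u v : int) : (q%:Z %| x)%Z -> (q%:Z %| y)%Z -> (q%:Z %| u * x + v * y)%Z.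
Proof. by move=> h1 h2; rewrite rpredD // dvdz_mull. Qed.

Lemma R_unitary : unitary (realign UU).
Proof.
apply: (@unitaryE R q) => b a b' a'.
rewrite (@sum_form R q hq _ (2 * b%:Z - a%:Z - 2 * b'%:Z + a'%:Z)
          (a%:Z - b%:Z - a'%:Z + b'%:Z) 0); last first.
  by move=> j i; rewrite !realignE Uprod /phi !PoszD !PoszM; congr (_ * ee _); ring.
rewrite ee0 mul1r DD -!(@dvd_ord q hq).
congr (_%:R); congr nat_of_bool; apply/idP/idP => /andP [h1 h2]; apply/andP; split.
- have -> : b%:Z - b'%:Z = 1 * (2 * b%:Z - a%:Z - 2 * b'%:Z + a'%:Z) + 1 * (a%:Z - b%:Z - a'%:Z + b'%:Z) by ring.
  exact: dvd_comb.
- have -> : a%:Z - a'%:Z = 1 * (2 * b%:Z - a%:Z - 2 * b'%:Z + a'%:Z) + 2 * (a%:Z - b%:Z - a'%:Z + b'%:Z) by ring.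
  exact: dvd_comb.
- have -> : 2 * b%:Z - a%:Z - 2 * b'%:Z + a'%:Z = 2 * (b%:Z - b'%:Z) + (-1) * (a%:Z - a'%:Z) by ring.
  exact: dvd_comb.
- have -> : a%:Z - b%:Z - a'%:Z + b'%:Z = (-1) * (b%:Z - b'%:Z) + 1 * (a%:Z - a'%:Z) by ring.
  exact: dvd_comb.
Qed.

Lemma Tsum i b i' b' :
  \sum_(k < q) \sum_(c < q) ptrans2 UU (idx i b) (idx k c) * conjc (ptrans2 UU (idx i' b') (idx k c))
  = ee (i'%:Z * b'%:Z - i%:Z * b%:Z) * D (2 * (b%:Z - b'%:Z)) * D (i%:Z - i'%:Z).
Proof.
apply: (@sum_form R q hq).
by move=> j a; rewrite !ptransE Uprod /phi !PoszD !PoszM; congr (_ * ee _); ring.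
Qed.

Lemma T_unitary_odd : odd q -> unitary (ptrans2 UU).
Proof.
move=> oq; apply: (@unitaryE R q) => i b i' b'.
rewrite Tsum (@D2odd R q) // !(@Dord R q hq).
case: (eqVneq i i') => [<-|]; case: (eqVneq b b') => [<-|] //= *;
  by rewrite ?subrr ?ee0 ?mulr0 ?mul0r ?mulr1.
Qed.

Lemma T_not_unitary_even : ~~ odd q -> ~ unitary (ptrans2 UU).
Proof.
move=> eq u.
have h0 : (0 < q)%N by lia.
have hh : (q./2 < q)%N by lia.
have := @unitary_mul4 R q _ u (Ordinal h0) (Ordinal h0) (Ordinal h0) (Ordinal hh).
rewrite Tsum /=.
have -> : (Ordinal h0 == Ordinal hh) = false.
  by apply/negbTE; rewrite -(inj_eq val_inj) /=; lia.
have hq2 : q%:Z = 2 * (q./2)%:Z.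
  have : q = (q./2 * 2)%N by rewrite -[LHS]odd_double_half (negbTE eq) add0n -muln2.
  by move=> {1}->; rewrite PoszM mulrC.
rewrite !mul0r !subrr ee0 mul1r sub0r mulrN -hq2 !(@DE R q) rpredN dvdzz dvdz0 mulr1.
by move/eqP; rewrite oner_eq0.
Qed.

Lemma swapE i a j b : swap R q (idx i a) (idx j b) = ((i == b) && (a == j))%:R.
Proof. by rewrite /swap mx4E. Qed.

Lemma sum2_delta (F : 'I_q -> 'I_q -> C) b j :
  \sum_(k < q) \sum_(c < q) F k c * ((k == b) && (c == j))%:R = F b j.
Proof.
rewrite (bigD1 b) //= [X in _ + X]big1 ?addr0 => [|k /negbTE kb]; last first.
  by apply: big1 => c _; rewrite kb /= mulr0.
rewrite (bigD1 j) //= (eqxx b) (eqxx j) mulr1 big1 ?addr0 // => c /negbTE cj.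
by rewrite cj mulr0.
Qed.

Lemma USE i a j b : (UU *m swap R q) (idx i a) (idx j b) = UU (idx i a) (idx b j).
Proof.
rewrite mulE -(sum2_delta (fun k c => UU (idx i a) (idx k c))).
by apply: eq_bigr => k _; apply: eq_bigr => c _; rewrite swapE.
Qed.

Lemma RS_unitary : unitary (realign (swap R q)).
Proof.
apply: (@unitaryE R q) => b a b' a'.
transitivity (\sum_(j < q) \sum_(i < q)
   (fun j i => ((i == b') && (a' == j))%:R) j i * ((j == a) && (i == b))%:R : C).
  apply: eq_bigr => j _; apply: eq_bigr => i _.
  rewrite !realignE !swapE conjc_nat mulrC; congr (_ * _%:R).
  by rewrite andbC [a == j]eq_sym.
by rewrite sum2_delta /= [a' == a]eq_sym.
Qed.

End P5.


Section P6.
Variables (R : realType) (q : nat).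
Hypothesis hq : (2 <= q)%N.
Local Notation C := R[i].
Local Notation Mq := 'M[C]_(q * q).
Local Notation ee := (ee R q).
Local Notation D := (D R q).
Local Notation UU := (U_C R q).

Definition Pm := realign (UU *m swap R q) *m adj (realign (UU *m swap R q)).

Lemma PE b a b' a' : Pm (idx b a) (idx b' a') =
  ee (b'%:Z * a'%:Z - b%:Z * a%:Z) * D (2 * (b%:Z - b'%:Z)) * D (a%:Z - a'%:Z).
Proof.
rewrite mulE; apply: (@sum_form R q hq) => j i.
rewrite adjE !realignE !USE Uprod /phi !PoszD !PoszM; congr (_ * ee _); ring.
Qed.

Lemma DN x : D (- x) = D x.
Proof. by rewrite (@DE R q) rpredN. Qed.

Lemma trP : \tr (Pm ^+ 2) = \sum_(b < q) \sum_(a < q) \sum_(k < q) D (2 * (b%:Z - k%:Z)).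
Proof.
rewrite expr2 -mulmxE trE; apply: eq_bigr => b _; apply: eq_bigr => a _.
rewrite mulE; apply: eq_bigr => k _.
apply: (etrans _ (@sum_delta R q (fun _ => D (2 * (b%:Z - k%:Z))) a)).
apply: eq_bigr => c _; rewrite !PE !(@Dord R q hq).
case: (eqVneq a c) => [<-|ac]; last first.
  by rewrite /= !mulr0n !mulr0 mul0r.
rewrite /= !mulr1n !mulr1 mul1r.
rewrite (_ : 2 * (k%:Z - b%:Z) = - (2 * (b%:Z - k%:Z))); last by ring.
rewrite DN mulrACA -eeD.
rewrite (_ : k%:Z * a%:Z - b%:Z * a%:Z + (b%:Z * a%:Z - k%:Z * a%:Z) = 0); last by ring.
by rewrite ee0 mul1r (@DD R q) andbb.
Qed.

Lemma Ent_unit (X : Mq) : unitary (realign X) ->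
  Ent X = 1 - (q%:R ^+ 4)^-1 * (q * q)%:R.
Proof.
by move=> [h _]; rewrite /Ent h expr2 -mulmxE mulmx1 mxtrace1.
Qed.

Lemma sum_const2 (x : C) : \sum_(b < q) \sum_(a < q) x = x * (q * q)%:R.
Proof.
under eq_bigr do rewrite sumr_const card_ord.
by rewrite sumr_const card_ord -mulrnA mulr_natr.
Qed.

Lemma Ent_US_odd : odd q -> Ent (UU *m swap R q) = 1 - (q%:R ^+ 4)^-1 * (q * q)%:R.
Proof.
move=> oq; rewrite /Ent; have := trP; rewrite /Pm => ->.
under eq_bigr do under eq_bigr do under eq_bigr do rewrite (@D2odd R q) //.
under eq_bigr do under eq_bigr do rewrite (@countD R q hq).
by rewrite sum_const2 mul1r.
Qed.

Lemma Ent_US_even : ~~ odd q ->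
  Ent (UU *m swap R q) = 1 - (q%:R ^+ 4)^-1 * (2 * (q * q)%:R).
Proof.
move=> eq; rewrite /Ent; have := trP; rewrite /Pm => ->.
under eq_bigr do under eq_bigr do under eq_bigr do rewrite (@D2even R q hq) //.
have h2 b : \sum_(k < q) (D (b%:Z - k%:Z) + D (b%:Z - k%:Z + (q./2)%:Z)) = 2.
  rewrite big_split /= (@countD R q hq).
  under eq_bigr do rewrite addrAC.
  by rewrite (@countD R q hq).
under eq_bigr => b _ do under eq_bigr do rewrite h2.
by rewrite sum_const2.
Qed.

End P6.


Section P7.
Variables (R : realType) (q : nat).
Local Notation C := R[i].
Local Notation Mq := 'M[C]_(q * q).

Lemma tensorIE (a : 'M[C]_q) k g l d :
  tensorI a (idx k g) (idx l d) = a k l * (g == d)%:R.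
Proof. by rewrite /tensorI mx4E. Qed.

Lemma ItensorE (a : 'M[C]_q) k g l d :
  Itensor a (idx k g) (idx l d) = (k == l)%:R * a g d.
Proof. by rewrite /Itensor mx4E. Qed.

Lemma Mplus0 (U : Mq) (a : 'M[C]_q) :
  unitary (ptrans2 U) -> \tr a = 0 -> Mplus U a = 0.
Proof.
move=> hT ha; rewrite /Mplus.
suff -> : ptr1 (adj U *m tensorI a *m U) = 0 by rewrite scaler0.
apply/matrixP => al be; rewrite !mxE.
transitivity (\sum_(i < q) \sum_(l < q) \sum_(k < q) \sum_(g < q)
   conjc (U (idx k g) (idx i al)) * a k l * U (idx l g) (idx i be)).
  apply: eq_bigr => i _; rewrite mulE; apply: eq_bigr => l _.
  under eq_bigr => d _ do rewrite mulE mulr_suml.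
  under eq_bigr => d _ do under eq_bigr => k _ do rewrite mulr_suml.
  rewrite exchange_big /=; apply: eq_bigr => k _.
  rewrite exchange_big /=; apply: eq_bigr => g _.
  apply: (etrans _ (@sum_delta R q (fun d => conjc (U (idx k g) (idx i al)) * a k l * U (idx l d) (idx i be)) g)).
  by apply: eq_bigr => d _; rewrite adjE tensorIE /=; ring.
transitivity (\sum_(k < q) \sum_(l < q) a k l *
   (\sum_(i < q) \sum_(g < q) U (idx l g) (idx i be) * conjc (U (idx k g) (idx i al)))).
  rewrite exchange_big /=.
  under eq_bigr => l _ do rewrite exchange_big /=.
  rewrite exchange_big /=.
  apply: eq_bigr => k _; apply: eq_bigr => l _.
  rewrite mulr_sumr; apply: eq_bigr => i _; rewrite mulr_sumr; apply: eq_bigr => g _.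
  ring.
have key l b k c : \sum_(i < q) \sum_(g < q) U (idx l g) (idx i b) * conjc (U (idx k g) (idx i c))
   = ((l == k) && (b == c))%:R.
  rewrite -(@unitary_mul4 R q _ hT); apply: eq_bigr => i _; apply: eq_bigr => g _.
  by rewrite !ptransE.
under eq_bigr => k _ do under eq_bigr => l _ do rewrite key.
transitivity (\sum_(k < q) a k k * (be == al)%:R).
  apply: eq_bigr => k _.
  apply: (etrans _ (@sum_delta R q (fun l => a k l * (be == al)%:R) k)).
  apply: eq_bigr => l _; rewrite [l == k]eq_sym.
  by case: (k == l); case: (be == al); rewrite /= ?mulr1n ?mulr0n ?mulr1 ?mulr0 ?mul1r ?mul0r.
by rewrite -mulr_suml -/(\tr a) ha mul0r.
Qed.

Lemma Mminus0 (U : Mq) (a : 'M[C]_q) :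
  unitary (ptrans2 U) -> \tr a = 0 -> Mminus U a = 0.
Proof.
move=> hT ha; rewrite /Mminus.
suff -> : ptr2 (adj U *m Itensor a *m U) = 0 by rewrite scaler0.
apply/matrixP => i j; rewrite !mxE.
transitivity (\sum_(al < q) \sum_(d < q) \sum_(k < q) \sum_(g < q)
   conjc (U (idx k g) (idx i al)) * a g d * U (idx k d) (idx j al)).
  apply: eq_bigr => al _; rewrite mulE.
  under eq_bigr => l _ do under eq_bigr => d _ do rewrite mulE mulr_suml.
  under eq_bigr => l _ do under eq_bigr => d _ do under eq_bigr => k _ do rewrite mulr_suml.
  rewrite exchange_big /=; apply: eq_bigr => d _.
  rewrite exchange_big /=; apply: eq_bigr => k _.
  rewrite exchange_big /=; apply: eq_bigr => g _.
  apply: (etrans _ (@sum_delta R q (fun l => conjc (U (idx k g) (idx i al)) * a g d * U (idx l d) (idx j al)) k)).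
  by apply: eq_bigr => l _; rewrite adjE ItensorE /=; ring.
transitivity (\sum_(g < q) \sum_(d < q) a g d *
   (\sum_(k < q) \sum_(al < q) conjc (U (idx k g) (idx i al)) * U (idx k d) (idx j al))).
  rewrite exchange_big /=.
  under eq_bigr => d _ do rewrite exchange_big /=.
  under eq_bigr => d _ do under eq_bigr => k _ do rewrite exchange_big /=.
  under eq_bigr => d _ do rewrite exchange_big /=.
  rewrite exchange_big /=.
  apply: eq_bigr => g _; apply: eq_bigr => d _.
  rewrite mulr_sumr; apply: eq_bigr => k _; rewrite mulr_sumr; apply: eq_bigr => al _.
  ring.
have key g d : \sum_(k < q) \sum_(al < q) conjc (U (idx k g) (idx i al)) * U (idx k d) (idx j al)
   = ((i == j) && (g == d))%:R.
  rewrite -(@unitary_mul4' R q _ hT); apply: eq_bigr => k _; apply: eq_bigr => al _.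
  by rewrite !ptransE.
under eq_bigr => g _ do under eq_bigr => d _ do rewrite key.
transitivity (\sum_(g < q) a g g * (i == j)%:R).
  apply: eq_bigr => g _.
  apply: (etrans _ (@sum_delta R q (fun d => a g d * (i == j)%:R) g)).
  apply: eq_bigr => d _.
  by case: (g == d); case: (i == j); rewrite /= ?mulr1n ?mulr0n ?mulr1 ?mulr0 ?mul1r ?mul0r.
by rewrite -mulr_suml -/(\tr a) ha mul0r.
Qed.

End P7.


Theorem mainTheorem7 (R : realType) (q : nat) (hq : (2 <= q)%N) :
  unitary (U_C R q) /\ dual_unitary (U_C R q) /\
  (odd q ->
     [/\ two_unitary (U_C R q), e_p (U_C R q) = 1,
         (forall lam, nontriv_eigenvalue (Mplus (U_C R q)) lam -> lam = 0) &
         (forall lam, nontriv_eigenvalue (Mminus (U_C R q)) lam -> lam = 0)]) /\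
  (~~ odd q ->
     ~ two_unitary (U_C R q) /\
     e_p (U_C R q) = ((q ^ 2)%:R - 2) / ((q ^ 2)%:R - 1)).
Proof.
have U1 := @U_unitary R q hq.
have R1 := @R_unitary R q hq.
have EU := @Ent_unit R q _ R1.
have ES := @Ent_unit R q _ (@RS_unitary R q).
have q0 : (q%:R : R[i]) != 0 by rewrite pnatr_eq0; lia.
have q1 : (q%:R : R[i]) ^+ 2 - 1 != 0.
  have e2 : (q ^ 2 = q * q)%N by rewrite expnS expn1.
  have h1 : (1 <= q ^ 2)%N by rewrite e2; nia.
  rewrite -natrX -[1](mulr1n 1) -natrB // pnatr_eq0 e2; nia.
split => //; split => //; split.
- move=> oq; have T1 := @T_unitary_odd R q hq oq.
  split.
  + by [].
  + rewrite /e_p EU ES (@Ent_US_odd R q hq oq).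
    have e1 : ((q * q)%:R : R[i]) = q%:R * q%:R by rewrite -natrM.
    rewrite e1; field.
    by rewrite q0 q1.
  + move=> lam [a [a0 tra h]]; move: h; rewrite (@Mplus0 R q _ _ T1 tra).
    by move/eqP; rewrite eq_sym scaler_eq0 (negbTE a0) orbF => /eqP.
  + move=> lam [a [a0 tra h]]; move: h; rewrite (@Mminus0 R q _ _ T1 tra).
    by move/eqP; rewrite eq_sym scaler_eq0 (negbTE a0) orbF => /eqP.
- move=> eq; split.
  + by move=> [_ [_ hT]]; apply: (@T_not_unitary_even R q hq eq).
  + rewrite /e_p EU ES (@Ent_US_even R q hq eq).
    have e1 : ((q * q)%:R : R[i]) = q%:R * q%:R by rewrite -natrM.
    have e2 : ((expn q 2)%:R : R[i]) = q%:R ^+ 2 by rewrite -natrX.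
    rewrite e1; field.
    by rewrite q0 q1.
Qed.
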